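(* Let $F$ and $p$ be positive integers. If $(d_1,d_2,\dots,d_p)$ is a $\mathrm{Sat}(F)$-sequence and $t_1,\dots,t_p$ are positive integers such that $t_1d_1+\cdots+t_pd_p<F$ and $\gcd\{d_i/d_{i+1},\,t_{i+1}\}=1$ for all $i\in\{1,\dots,p-1\}$, then $$\{d_1,\ t_1d_1+t_2d_2,\ \dots,\ t_1d_1+t_2d_2+\cdots+t_pd_p\}$$ is the minimal $\mathrm{Sat}(F)$-system of generators of an element of $\mathrm{Sat}(F)$ whose $\mathrm{Sat}(F)$-rank equals $p$. Moreover, every minimal $\mathrm{Sat}(F)$-system of generators of an element of $\mathrm{Sat}(F)$ with $\mathrm{Sat}(F)$-rank $p$ is of this form for some such $\mathrm{Sat}(F)$-sequence $(d_1,\dots,d_p)$ and positive integers $t_1,\dots,t_p$.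
   Context: A numerical semigroup is a subset $S\subseteq\mathbb{N}$ closed under addition, containing $0$, with $\mathbb{N}\setminus S$ finite; its Frobenius number $\mathrm{F}(S)$ is the largest integer not in $S$. For $A\subseteq\mathbb{N}$ and $a\in A$, let $\mathrm{d}_A(a)=\gcd\{x\in A\mid x\le a\}$. A numerical semigroup $S$ is saturated if $s+\mathrm{d}_S(s)\in S$ for all $s\in S\setminus\{0\}$. For a positive integer $F$, $\mathrm{Sat}(F)$ denotes the set of all saturated numerical semigroups $S$ with $\mathrm{F}(S)=F$. Let $\Delta(F+1)=\{0\}\cup\{x\in\mathbb{N}\mid x\ge F+1\}$. A set $X\subseteq\mathbb{N}$ is a $\mathrm{Sat}(F)$-set if $X\cap\Delta(F+1)=\emptyset$ and there exists $S\in\mathrm{Sat}(F)$ with $X\subseteq S$. For a $\mathrm{Sat}(F)$-set $X$, $\mathrm{Sat}(F)[X]$ denotes the intersection of all elements of $\mathrm{Sat}(F)$ containing $X$ (the smallest element of $\mathrm{Sat}(F)$ containing $X$). If $S=\mathrm{Sat}(F)[X]$, $X$ is a $\mathrm{Sat}(F)$-system of generators of $S$; it is minimal if $S\neq\mathrm{Sat}(F)[Y]$ for every proper subset $Y\subsetneq X$. Every $S\in\mathrm{Sat}(F)$ has a unique minimal $\mathrm{Sat}(F)$-system of generators, and its cardinality is the $\mathrm{Sat}(F)$-rank of $S$. For $k\ge1$, a $\mathrm{Sat}(F)$-sequence of length $k$ is a sequence of positive integers $(d_1,\dots,d_k)$ with $d_1>d_2>\cdots>d_k$, $d_{i+1}\mid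 d_i$ for all $i\in\{1,\dots,k-1\}$, and $d_k\nmid F$. *)

(* Defs.v *)
From mathcomp Require Import all_boot.
Set Implicit Arguments. Unset Strict Implicit. Unset Printing Implicit Defensive.

Definition is_num_semigroup (S : pred nat) : Prop :=
  [/\ S 0, (forall x y, S x -> S y -> S (x + y)) & exists N, forall x, N <= x -> S x].

Definition frobenius_is (S : pred nat) (F : nat) : Prop :=
  ~~ S F /\ (forall x, F < x -> S x).

Definition dA (A : pred nat) (a : nat) : nat :=
  \big[gcdn/0]_(0 <= x < a.+1 | A x) x.

Definition saturated (S : pred nat) : Prop :=
  forall s, S s -> s != 0 -> S (s + dA S s).

Definition inSat (F : nat) (S : pred nat) : Prop :=
  [/\ is_num_semigroup S, saturated S & frobenius_is S F].

Definition SatSet (F : nat) (X : pred nat) : Prop :=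
  (forall x, X x -> ~~ ((x == 0) || (F.+1 <= x))) /\
  exists S, inSat F S /\ {subset X <= S}.

Definition SatGen (F : nat) (X S : pred nat) : Prop :=
  [/\ SatSet F X, inSat F S, {subset X <= S} &
      forall T, inSat F T -> {subset X <= T} -> {subset S <= T}].

Definition minimal_SatGen (F : nat) (X S : pred nat) : Prop :=
  SatGen F X S /\
  forall Y : pred nat, {subset Y <= X} -> (exists x, X x && ~~ Y x) -> ~ SatGen F Y S.

(* Cardinality of a subset of {0,..,F} (Sat(F)-sets lie in [1,F]). *)
Definition cardF (F : nat) (X : pred nat) : nat := count X (iota 0 F.+1).

Definition Sat_rank (F : nat) (S : pred nat) (r : nat) : Prop :=
  exists X, minimal_SatGen F X S /\ cardF F X = r.

(* (d_1,...,d_p) is a Sat(F)-sequence; indices shifted to 0..p-1. *)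
Definition SatSeq (F p : nat) (d : nat -> nat) : Prop :=
  [/\ forall i, i < p -> 0 < d i,
      forall i, i.+1 < p -> d i.+1 < d i,
      forall i, i.+1 < p -> d i.+1 %| d i &
      ~~ (d p.-1 %| F)].

Definition partial_sum (d t : nat -> nat) (k : nat) : nat :=
  \sum_(i < k.+1) t i * d i.

(* The set {d_1, t_1 d_1 + t_2 d_2, ..., t_1 d_1 + ... + t_p d_p}
   (indices shifted to 0..p-1; note the first element is d_1 itself). *)
Definition gens (p : nat) (d t : nat -> nat) : pred nat :=
  fun x => (x == d 0) || has (fun k => x == partial_sum d t k) (iota 1 p.-1).

(* Main.v *)
Require Import Defs.
From mathcomp Require Import all_boot.
From mathcomp Require Import zify.
Set Implicit Arguments. Unset Strict Implicit. Unset Printing Implicit Defensive.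


Lemma dvd_biggcd (I : eqType) (r : seq I) (P : pred I) (f : I -> nat) d :
  d %| \big[gcdn/0]_(i <- r | P i) f i <-> (forall i, i \in r -> P i -> d %| f i).
Proof.
elim: r => [|a r IH]; rewrite ?big_nil ?big_cons.
  by split=> // _ i; rewrite in_nil.
case Pa: (P a).
  rewrite dvdn_gcd; split.
    case/andP=> da /IH H i; rewrite in_cons => /orP[/eqP->|ir] Pi; [exact: da| exact: H].
  move=> H; rewrite H ?mem_head //=; apply/IH => i ir Pi; apply: H => //; by rewrite in_cons ir orbT.
split.
  move/IH=> H i; rewrite in_cons => /orP[/eqP->|ir] Pi; [by rewrite Pa in Pi| exact: H].
move=> H; apply/IH => i ir Pi; apply: H => //; by rewrite in_cons ir orbT.
Qed.

Lemma dvd_dA (A : pred nat) a d : d %| dA A a <-> (forall x, x <= a -> A x -> d %| x).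
Proof.
rewrite /dA dvd_biggcd; split=> H x.
  by move=> xa Ax; apply: H => //; rewrite mem_index_iota /= ltnS xa.
by rewrite mem_index_iota /= ltnS => xa; apply: H.
Qed.

Lemma gcd_eq a b : (forall d, d %| a <-> d %| b) -> a = b.
Proof.
move=> H; apply/eqP; rewrite eqn_dvd; apply/andP; split; [apply/H | apply/H]; exact: dvdnn.
Qed.

Lemma dA_el (A : pred nat) a x : x <= a -> A x -> dA A a %| x.
Proof. by move=> xa Ax; move: (dvdnn (dA A a)) => /dvd_dA; apply. Qed.

Lemma dA_mono (A : pred nat) a b : a <= b -> dA A b %| dA A a.
Proof. move=> ab; apply/dvd_dA => x xa Ax; apply: dA_el => //; exact: leq_trans ab. Qed.

Lemma dA_pos (A : pred nat) a x : x <= a -> A x -> 0 < x -> 0 < dA A a.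
Proof.
move=> xa Ax x0; rewrite lt0n; apply/negP => /eqP h.
by move: (dA_el xa Ax); rewrite h dvd0n => /eqP e; rewrite e in x0.
Qed.

Lemma dA_zero (A : pred nat) a : (forall x, x <= a -> A x -> x = 0) -> dA A a = 0.
Proof.
move=> H; apply/eqP; rewrite -dvd0n; apply/dvd_dA => x xa Ax; by rewrite (H x xa Ax).
Qed.

Lemma dA_sub (A B : pred nat) a : (forall x, A x -> B x) -> dA B a %| dA A a.
Proof. move=> AB; apply/dvd_dA => x xa Ax; apply: dA_el => //; exact: AB. Qed.

Definition Cl F (X : pred nat) : pred nat :=
  fun x => (x == 0) || (F < x) || ((0 < dA X x) && (dA X x %| x)).

Lemma Cl_small F X x : Cl F X x -> x != 0 -> x <= F -> (0 < dA X x) && (dA X x %| x).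
Proof.
rewrite /Cl => /orP[/orP[/eqP->|Fx]|//]; first by rewrite eqxx.
by move=> _ xF; move: (leq_trans Fx xF); rewrite ltnn.
Qed.

Lemma dvd_Cl F X x c : x <= F -> c <= x -> Cl F X c -> dA X x %| c.
Proof.
rewrite /Cl => xF cx /orP[/orP[/eqP->|Fc]|/andP[_ h]]; first exact: dvdn0.
  by move: (leq_trans Fc (leq_trans cx xF)); rewrite ltnn.
exact: dvdn_trans (dA_mono X cx) h.
Qed.

Lemma X_sub_Cl F (X : pred nat) x : X x -> Cl F X x.
Proof.
move=> Xx; rewrite /Cl; case: (posnP x) => [->//|x0].
by rewrite (dA_pos (leqnn x) Xx x0) (dA_el (leqnn x) Xx) !orbT.
Qed.

Lemma sat_key (T : pred nat) x : saturated T ->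
  (exists y, [/\ y <= x, T y & 0 < y]) ->
  (forall z, z <= x -> T z -> 0 < z -> (forall w, z < w -> w <= x -> ~~ T w) -> dA T z %| x) ->
  T x.
Proof.
move=> hT [y [yx Ty y0]] H.
have ex : exists z, [&& 0 < z, z <= x & T z] by exists y; rewrite y0 yx Ty.
have bd : forall z, [&& 0 < z, z <= x & T z] -> z <= x by move=> z /and3P[].
case: (ex_maxnP ex bd) => z /and3P[z0 zx Tz] zmax.
have nb : forall w, z < w -> w <= x -> ~~ T w.
  move=> w zw wx; apply/negP => Tw.
  have := zmax w; rewrite (leq_trans z0 (ltnW zw)) wx Tw => /(_ isT).
  by rewrite leqNgt zw.
have dx := H z zx Tz z0 nb.
have dz := dA_el (leqnn z) Tz.
have dp := dA_pos (leqnn z) Tz z0.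
have Tw := hT z Tz (lt0n_neq0 z0).
case: (ltngtP z x) => [zlx| |<-//]; last by rewrite ltnNge zx.
have dd : dA T z %| x - z by apply: dvdn_sub.
have le : dA T z <= x - z by apply: dvdn_leq dd; rewrite subn_gt0.
have := nb (z + dA T z) (ltac:(lia)) (ltac:(lia)).
by rewrite Tw.
Qed.

Lemma Cl_least F X T : inSat F T -> {subset X <= T} -> forall x, Cl F X x -> T x.
Proof.
move=> [[T0 Tadd _] hT [nTF TF]] XT x Clx.
move: Clx; rewrite /Cl => /orP[/orP[/eqP->//|Fx]|/andP[g0 gx]]; first exact: TF.
case: (boolP (has (fun y => X y && (0 < y)) (iota 0 x.+1))) => [/hasP[y]|/hasPn hn].
  rewrite mem_iota /= ltnS => yx /andP[Xy y0].
  apply: sat_key => //; first by exists y; split=> //; exact: XT.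
  move=> z zx Tz z0 nb; apply: dvdn_trans gx; apply/dvd_dA => w wx Xw.
  case: (leqP w z) => wz; first by apply: dA_el => //; exact: XT.
  by case/negP: (nb w wz wx); exact: XT.
move: g0; rewrite dA_zero // => w wx Xw.
have := hn w; rewrite mem_iota /= ltnS wx Xw /= => /(_ isT).
by case: w {wx Xw}.
Qed.

Lemma Cl_inSat F X : ~~ Cl F X F -> inSat F (Cl F X).
Proof.
move=> nF; split; last by split=> // x Fx; rewrite /Cl Fx orbT.
- split; first by rewrite /Cl eqxx.
  + move=> x y hx hy.
    case x0: (x == 0); first by move/eqP: x0 => ->.
    case y0: (y == 0); first by move/eqP: y0 => ->; rewrite addn0.
    case: (ltnP F (x + y)) => h; first by rewrite /Cl h orbT.
    have /andP[gx dx] := Cl_small hx (negbT x0) (leq_trans (leq_addr y x) h).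
    have /andP[gy dy] := Cl_small hy (negbT y0) (leq_trans (leq_addl x y) h).
    have m1 := dA_mono X (leq_addr y x).
    have m2 := dA_mono X (leq_addl x y).
    rewrite /Cl; apply/orP; right; apply/andP; split.
      rewrite lt0n; apply/negP => /eqP h0; move: m1; rewrite h0 dvd0n => /eqP hx0.
      by rewrite hx0 in gx.
    exact: dvdn_add (dvdn_trans m1 dx) (dvdn_trans m2 dy).
  + by exists F.+1 => x hx; rewrite /Cl hx orbT.
- move=> s hs s0.
  case: (ltnP F s) => Fs; first by rewrite /Cl (ltn_addr _ Fs) orbT.
  have /andP[g0 gs] := Cl_small hs s0 Fs.
  have gc : dA X s %| dA (Cl F X) s.
    apply/dvd_dA => c cs Clc; exact: dvd_Cl Fs cs Clc.
  case: (ltnP F (s + dA (Cl F X) s)) => h; first by rewrite /Cl h orbT.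
  have m := dA_mono X (leq_addr (dA (Cl F X) s) s).
  rewrite /Cl; apply/orP; right; apply/andP; split.
    rewrite lt0n; apply/negP => /eqP h0; move: m; rewrite h0 dvd0n => /eqP hx0.
    by rewrite hx0 in g0.
  exact: dvdn_trans m (dvdn_add gs gc).
Qed.

Lemma Cl_gen F X : SatSet F X -> SatGen F X (Cl F X).
Proof.
move=> [hX [S [hS XS]]].
have nF : ~~ Cl F X F.
  apply/negP => h; have := Cl_least hS XS h.
  by case: hS => _ _ [nSF _]; apply/negP.
split=> //; [by split=> //; exists S | exact: Cl_inSat | by move=> x; exact: X_sub_Cl|].
move=> T hT XT x; exact: Cl_least hT XT x.
Qed.

Lemma SatGen_eq F X S : SatGen F X S -> S =1 Cl F X.
Proof.
move=> hG; have [hX hS XS least] := hG.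
have [_ hC _ _] := Cl_gen hX.
move=> x; apply/idP/idP => h.
  exact: (least _ hC (fun y => @X_sub_Cl F X y) x h).
exact: (Cl_least hS XS h).
Qed.

Lemma dAS F X S y : S =1 Cl F X -> y <= F -> dA S y = dA X y.
Proof.
move=> hSC yF; apply: gcd_eq => d; rewrite !dvd_dA; split => H w wy Xw.
  apply: H => //; rewrite hSC; exact: X_sub_Cl.
have Cw : Cl F X w by rewrite -hSC.
apply: dvdn_trans (dvd_Cl yF wy Cw); by apply/dvd_dA.
Qed.

Lemma SatSet_bound F X x : SatSet F X -> X x -> 0 < x /\ x <= F.
Proof.
case=> h _ Xx; move: (h x Xx); rewrite negb_or -ltnNge ltnS lt0n.
by case/andP.
Qed.

Lemma dA_skip (X : pred nat) x : ~~ X x -> dA X x = dA X x.-1.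
Proof.
move=> nX; case: x nX => [//|x] nX /=; apply: gcd_eq => d; rewrite !dvd_dA.
split=> H w wx Xw.
  by apply: H => //; exact: leqW.
have nw : w != x.+1 by apply: contraNneq nX => <-.
apply: H => //; lia.
Qed.

Lemma min_char F X S x : minimal_SatGen F X S ->
  X x = [&& 0 < x, x <= F, S x & ~~ ((0 < dA S x.-1) && (dA S x.-1 %| x))].
Proof.
move=> [hG hmin]; have hSC := SatGen_eq hG; have [hX hS XS least] := hG.
apply/idP/idP => [Xx|/and4P[x0 xF Sx hn]]; last first.
  case Xx: (X x) => //; move: hn; rewrite hSC in Sx.
  have /andP[g0 gx] := Cl_small Sx (lt0n_neq0 x0) xF.
  rewrite (dAS hSC (leq_trans (leq_pred x) xF)) -dA_skip ?Xx //.
  by rewrite g0 gx.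
have [x0 xF] := SatSet_bound hX Xx.
have Sx : S x := XS x Xx.
rewrite x0 xF Sx /=; apply/negP => /andP[g0 gx].
rewrite (dAS hSC (leq_trans (leq_pred x) xF)) in g0 gx.
pose Y := fun y => X y && (y != x).
apply: (hmin Y); first by move=> y /andP[].
  by exists x; rewrite /Y Xx eqxx.
have eqd : forall z, dA Y z = dA X z.
  move=> z; apply: gcd_eq => d; rewrite !dvd_dA; split=> H w wz Xw; last first.
    by apply: H => //; case/andP: Xw.
  case: (eqVneq w x) => [ew|nw]; last by apply: H; rewrite // /Y Xw nw.
  rewrite ew; apply: dvdn_trans gx; apply/dvd_dA => v vx Xv; apply: H.
    rewrite ew in wz; apply: leq_trans wz; apply: leq_trans vx _; exact: leq_pred.
  rewrite /Y Xv; apply/negP=> /eqP ev; move: vx; rewrite ev; case: (x) x0 => //= k _.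
  by rewrite ltnn.
have eqC : Cl F Y =1 Cl F X by move=> z; rewrite /Cl eqd.
split.
- split; first by move=> y /andP[Xy _]; case: hX => h _; exact: h.
  by exists S; split=> // y /andP[Xy _]; exact: XS.
- exact: hS.
- by move=> y /andP[Xy _]; exact: XS.
- move=> T hT YT y Sy; apply: (Cl_least hT YT); rewrite eqC -hSC; exact: Sy.
Qed.


Lemma chain_lt (f : nat -> nat) p : (forall k, k.+1 < p -> f k < f k.+1) ->
  forall j k, j < k -> k < p -> f j < f k.
Proof.
move=> H j k; elim: k => [//|k IH] jk kp.
rewrite ltnS leq_eqVlt in jk; case/orP: jk => [/eqP->|jk]; first exact: H.
exact: ltn_trans (IH jk (ltnW kp)) (H k kp).
Qed.

Lemma chain_dvd (f : nat -> nat) p : (forall k, k.+1 < p -> f k.+1 %| f k) ->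
  forall j k, j <= k -> k < p -> f k %| f j.
Proof.
move=> H j k; elim: k => [|k IH] jk kp; first by rewrite leqn0 in jk; move/eqP: jk => ->.
rewrite leq_eqVlt in jk; case/orP: jk => [/eqP->//|jk].
exact: dvdn_trans (H k kp) (IH jk (ltnW kp)).
Qed.

Lemma mono_inv (f : nat -> nat) p : (forall j k, j < k -> k < p -> f j < f k) ->
  forall j k, j < p -> f j < f k -> j < k.
Proof.
move=> H j k jp fjk; rewrite ltnNge; apply/negP; rewrite leq_eqVlt => /orP[/eqP e|kj].
  by rewrite e ltnn in fjk.
by move: (H _ _ kj jp); rewrite ltnNge (ltnW fjk).
Qed.

Lemma ps_rec (d t : nat -> nat) k : partial_sum d t k.+1 = partial_sum d t k + t k.+1 * d k.+1.
Proof. by rewrite /partial_sum big_ord_recr. Qed.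

Lemma ps0 (d t : nat -> nat) : partial_sum d t 0 = t 0 * d 0.
Proof. by rewrite /partial_sum big_ord1. Qed.

Lemma totsum (d t : nat -> nat) p : 0 < p -> \sum_(i < p) t i * d i = partial_sum d t p.-1.
Proof. by move=> p0; rewrite /partial_sum prednK. Qed.

Lemma gensE p (d t : nat -> nat) x : 0 < p ->
  gens p d t x = has (fun k => x == (if k is 0 then d 0 else partial_sum d t k)) (iota 0 p).
Proof.
case: p => // p _; rewrite /gens /=; congr (_ || _).
apply: eq_in_has => k; rewrite mem_iota => /andP[k1 _]; by case: k k1.
Qed.

Lemma count_img F p (n : nat -> nat) (X : pred nat) :
  (forall k, k < p -> n k <= F) ->
  (forall j k, j < k -> k < p -> n j < n k) ->
  (forall x, X x = has (fun k => x == n k) (iota 0 p)) ->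
  count X (iota 0 F.+1) = p.
Proof.
move=> hF hmono hX.
have -> : count X (iota 0 F.+1) = count (fun x => x \in map n (iota 0 p)) (iota 0 F.+1).
  apply: eq_count => x; rewrite hX /=.
  apply/hasP/mapP => [[k kp /eqP->]|[k kp ->]]; by exists k.
rewrite -size_filter.
have us : uniq (map n (iota 0 p)).
  rewrite map_inj_in_uniq ?iota_uniq // => j k; rewrite !mem_iota /= !add0n => jp kp ejk.
  case: (ltngtP j k) => // h; [have := hmono j k h kp | have := hmono k j h jp];
    by rewrite ejk ltnn.
rewrite (perm_size (uniq_perm (filter_uniq _ (iota_uniq 0 F.+1)) us _)) ?size_map ?size_iota //.
move=> x; rewrite mem_filter; apply/andP/idP => [[]//|h]; split=> //.
rewrite mem_iota /= ltnS; case/mapP: h => k; rewrite mem_iota => /andP[_ kp] ->.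
exact: hF.
Qed.


Lemma part1 F p (d t : nat -> nat) : 0 < F -> 0 < p -> SatSeq F p d -> (forall i, i < p -> 0 < t i) ->
  \sum_(i < p) t i * d i < F -> (forall i, i.+1 < p -> gcdn (d i %/ d i.+1) (t i.+1) = 1) ->
  exists S, [/\ inSat F S, minimal_SatGen F (gens p d t) S & Sat_rank F S p].
Proof.
move=> F0 p0 [dpos dlt ddv dF] tpos hsum hg.
pose n k := if k is 0 then d 0 else partial_sum d t k.
rewrite totsum // in hsum.
have psmono : forall j k, j <= k -> partial_sum d t j <= partial_sum d t k.
  move=> j k; elim: k => [|k IH] jk; first by rewrite leqn0 in jk; move/eqP: jk => ->.
  rewrite leq_eqVlt in jk; case/orP: jk => [/eqP->//|jk].
  by rewrite ps_rec; apply: leq_trans (IH jk) (leq_addr _ _).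
have nle : forall k, n k <= partial_sum d t k.
  by case=> [|k] //=; rewrite ps0 leq_pmull // tpos.
have pm1 : p.-1 < p by rewrite prednK.
have nltF : forall k, k < p -> n k < F.
  move=> k kp; apply: leq_ltn_trans (nle k) _; apply: leq_ltn_trans hsum.
  by apply: psmono; rewrite -ltnS prednK.
have npos : forall k, k < p -> 0 < n k.
  case=> [|k] kp; first exact: dpos.
  apply: leq_trans (psmono 0 k.+1 isT); rewrite ps0 muln_gt0 tpos ?dpos //.
have nstep : forall k, k.+1 < p -> n k < n k.+1.
  move=> k kp; apply: leq_ltn_trans (nle k) _; rewrite /= ps_rec -addn1 leq_add2l.
  by rewrite muln_gt0 tpos ?dpos.
have nmono := chain_lt nstep.
have dch := chain_dvd ddv.
have dps : forall j k, j <= k -> k < p -> d k %| partial_sum d t j.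
  move=> j k jk kp; rewrite /partial_sum; apply: dvdn_sum => i _; apply: dvdn_mull.
  apply: dch kp; apply: leq_trans jk; by rewrite -ltnS.
have dn : forall j k, j <= k -> k < p -> d k %| n j.
  move=> [|j] k jk kp; [exact: dch | exact: dps].
have N6 : forall k, k.+1 < p -> ~~ (d k %| n k.+1).
  move=> k kp; apply/negP => h.
  rewrite /= ps_rec dvdn_addr in h; last exact: dps (leqnn k) (ltnW kp).
  have e := divnK (ddv k kp).
  rewrite -e dvdn_pmul2r ?dpos // in h.
  have : d k %/ d k.+1 %| 1 by rewrite -(hg k kp) dvdn_gcd dvdnn h.
  rewrite dvdn1 => /eqP m1.
  by move: (dlt k kp); rewrite -e m1 mul1n ltnn.
pose X := gens p d t.
have hXE : forall x, X x = has (fun k => x == n k) (iota 0 p) by move=> x; rewrite /X gensE.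
have inX : forall x, X x -> exists2 k, k < p & x = n k.
  move=> x; rewrite hXE => /hasP[k]; rewrite mem_iota => /andP[_ kp] /eqP ->.
  by exists k.
have nF : ~~ Cl F X F.
  rewrite /Cl ltnn eqn0Ngt F0 /=; apply/negP => /andP[_ h].
  have : d p.-1 %| dA X F.
    apply/dvd_dA => w wF Xw; case: (inX w Xw) => k kp ->; apply: dn => //.
    by rewrite -ltnS prednK.
  move=> h'; move: dF; rewrite (dvdn_trans h' h) //.
have hSS : SatSet F X.
  split; last by exists (Cl F X); split; [exact: Cl_inSat | move=> y; exact: X_sub_Cl].
  move=> x Xx; case: (inX x Xx) => k kp ->.
  have := npos k kp; have := nltF k kp.
  rewrite negb_or -lt0n -ltnNge => h1 h2; rewrite h2 /=; lia.
have hGen := Cl_gen hSS.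
have hmin : minimal_SatGen F X (Cl F X).
  split=> // Y YX [x /andP[Xx nYx]] hY.
  have hSC := SatGen_eq hY.
  case: (inX x Xx) => k kp ex.
  have CX : Cl F X x := X_sub_Cl F Xx.
  rewrite hSC in CX.
  have /andP[g0 gx] := Cl_small CX (ltac:(rewrite ex -lt0n; exact: npos)) (ltac:(rewrite ex; exact: ltnW (nltF k kp))).
  case: k kp ex => [|k] kp ex.
    move: g0; rewrite dA_zero // => w wx Yw; exfalso.
    case: (inX w (YX w Yw)) => j jp ew; case: j jp ew => [|j] jp ew.
      by move: nYx; rewrite ex -ew Yw.
    have := nmono 0 j.+1 isT jp; rewrite -ew -ex; lia.
  have : d k %| dA Y x.
    apply/dvd_dA => w wx Yw; case: (inX w (YX w Yw)) => j jp ew.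
    rewrite ew; apply: dn; last exact: ltnW kp.
    case: (ltnP k j) => // kj.
    case: (eqVneq j k.+1) => [ejk|njk].
      by move: nYx; rewrite ex -ejk -ew Yw.
    have := nmono k.+1 j (ltac:(lia)) jp; rewrite -ew -ex; lia.
  move=> h; move: (N6 k kp); rewrite -ex (dvdn_trans h gx) //.
exists (Cl F X); split=> //; first by case: hGen.
exists X; split=> //; rewrite /cardF; apply: (count_img (n:=n)) => //.
by move=> k kp; exact: ltnW (nltF k kp).
Qed.


Lemma part2 F p (S X : pred nat) : 0 < F -> 0 < p -> inSat F S -> Sat_rank F S p ->
  minimal_SatGen F X S ->
  exists d t : nat -> nat,
    [/\ SatSeq F p d, (forall i, i < p -> 0 < t i), \sum_(i < p) t i * d i < F,
      (forall i, i.+1 < p -> gcdn (d i %/ d i.+1) (t i.+1) = 1) & X =1 gens p d t].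
Proof.
move=> F0 p0 hS [X' [hX' cX']] hX.
have eXX : X =1 X' by move=> x; rewrite (min_char x hX) (min_char x hX').
have cX : count X (iota 0 F.+1) = p by rewrite -cX' /cardF; apply: eq_count.
have [hG _] := hX; have hSC := SatGen_eq hG; have [hXs _ XS _] := hG.
have nSF : ~~ S F by case: hS => _ _ [].
pose s := filter X (iota 0 F.+1).
have ss : size s = p by rewrite size_filter.
have srt : sorted ltn s := sorted_filter ltn_trans _ (iota_ltn_sorted 0 F.+1).
pose n k := nth 0 s k.
have nmono : forall j k, j < k -> k < p -> n j < n k.
  move=> j k jk kp; apply: (sorted_ltn_nth ltn_trans 0 srt) => //; rewrite inE ss //.
  exact: ltn_trans jk kp.
have nX : forall k, k < p -> X (n k) && (n k <= F).
  move=> k kp; have : n k \in s by apply: mem_nth; rewrite ss.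
  by rewrite mem_filter mem_iota /= ltnS.
have Xn : forall x, X x -> exists2 k, k < p & x = n k.
  move=> x Xx; have [_ xF] := SatSet_bound hXs Xx.
  have xs : x \in s by rewrite mem_filter Xx mem_iota /= ltnS.
  exists (index x s); [by rewrite -ss index_mem | by rewrite /n nth_index].
have npos : forall k, k < p -> 0 < n k.
  by move=> k kp; case/andP: (nX k kp) => Xk _; case: (SatSet_bound hXs Xk).
have nltF : forall k, k < p -> n k < F.
  move=> k kp; case/andP: (nX k kp) => Xk kF; rewrite ltn_neqAle kF andbT.
  apply/negP => /eqP e; have := XS _ Xk; rewrite e => SF; by case/negP: nSF.
have ninv := mono_inv nmono.
have nle : forall j k, j <= k -> k < p -> n j <= n k.
  move=> j k; rewrite leq_eqVlt => /orP[/eqP->//|jk] kp; exact: ltnW (nmono j k jk kp).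
have XnP : forall k, k < p -> X (n k) by move=> k kp; case/andP: (nX k kp).
have between : forall k w, k.+1 < p -> n k < w -> w < n k.+1 -> ~~ X w.
  move=> k w kp h1 h2; apply/negP => Xw; case: (Xn w Xw) => j jp ew; rewrite ew in h1 h2.
  have := ninv _ _ (ltnW kp) h1; have := ninv _ _ jp h2; lia.
have below : forall w, w < n 0 -> ~~ X w.
  move=> w h; apply/negP => Xw; case: (Xn w Xw) => j jp ew; rewrite ew in h.
  by have := ninv _ _ jp h.
have pm1 : p.-1 < p by rewrite prednK.
have above : forall w, n p.-1 < w -> ~~ X w.
  move=> w h; apply/negP => Xw; case: (Xn w Xw) => j jp ew; rewrite ew in h.
  have := ninv _ _ pm1 h; lia.
pose d k := dA X (n k).
have D0 : d 0 = n 0.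
  apply: gcd_eq => e; rewrite dvd_dA; split => [H|H w wx Xw].
    by apply: H => //; exact: XnP.
  case: (ltngtP w (n 0)) wx => [wl|//|->//] _.
  by move: (below w wl); rewrite Xw.
have Dstep : forall k, k.+1 < p -> d k.+1 = gcdn (d k) (n k.+1).
  move=> k kp; apply: gcd_eq => e; rewrite dvdn_gcd; split.
    move/dvd_dA => H; apply/andP; split; last by apply: H => //; exact: XnP.
    apply/dvd_dA => w wx Xw; apply: H Xw; apply: leq_trans wx (ltnW (nmono k k.+1 _ kp)).
    exact: ltnSn.
  case/andP=> h1 h2; apply/dvd_dA => w wx Xw.
  case: (leqP w (n k)) => wk; first by move/dvd_dA: h1; apply.
  case: (ltngtP w (n k.+1)) wx => [wl|//|->//] _.
  by move: (between k w kp wk wl); rewrite Xw.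
have Dlast : dA X F = d p.-1.
  apply: gcd_eq => e; rewrite /d !dvd_dA; split => H w wx Xw.
    by apply: H Xw; apply: leq_trans wx (ltnW (nltF _ pm1)).
  apply: (H w) => //; case: (leqP w (n p.-1)) => // h; by move: (above w h); rewrite Xw.
have Dprev : forall k, k.+1 < p -> dA X (n k.+1).-1 = d k.
  move=> k kp; have := nmono k k.+1 (ltnSn k) kp => lt.
  apply: gcd_eq => e; rewrite /d !dvd_dA; split => H w wx Xw.
    by apply: H Xw; apply: leq_trans wx _; rewrite -ltnS prednK // (leq_ltn_trans _ lt).
  apply: (H w) => //; case: (leqP w (n k)) => // h.
  have h2 : w < n k.+1 by rewrite -(prednK (leq_ltn_trans (leq0n _) lt)) ltnS.
  by move: (between k w kp h h2); rewrite Xw.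
have dpos : forall k, k < p -> 0 < d k.
  by move=> k kp; apply: (dA_pos (leqnn _) (XnP k kp)); exact: npos.
have jump : forall k, k.+1 < p -> ~~ ((0 < d k) && (d k %| n k.+1)).
  move=> k kp; have := XnP _ kp; rewrite (min_char _ hX) => /and4P[_ _ _].
  by rewrite (dAS hSC (leq_trans (leq_pred _) (ltnW (nltF _ kp)))) Dprev.
have delA : forall k, k < p -> d k %| n k.
  by move=> k kp; apply: dA_el => //; exact: XnP.
have dvd_diff : forall k, k.+1 < p -> d k.+1 %| n k.+1 - n k.
  move=> k kp; apply: dvdn_sub; first exact: delA.
  by apply: dvdn_trans (delA k (ltnW kp)); rewrite Dstep // dvdn_gcdl.
pose t k := if k is k'.+1 then (n k - n k') %/ d k else 1.
have ps : forall k, k < p -> partial_sum d t k = n k.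
  elim=> [|k IH] kp; first by rewrite ps0 /= mul1n D0.
  rewrite ps_rec IH ?(ltnW kp) //= divnK ?dvd_diff // subnKC //.
  exact: ltnW (nmono k k.+1 (ltnSn k) kp).
have n'E : forall k, k < p -> (if k is 0 then d 0 else partial_sum d t k) = n k.
  by case=> [|k] kp; [exact: D0 | exact: ps].
exists d, t; split.
- split.
  + exact: dpos.
  + move=> k kp; have dv : d k.+1 %| d k by rewrite Dstep // dvdn_gcdl.
    rewrite ltn_neqAle dvdn_leq ?dpos ?(ltnW kp) // andbT.
    apply/negP => /eqP e; move: (jump k kp); rewrite dpos ?(ltnW kp) //= -e.
    by rewrite dA_el //; exact: XnP.
  + by move=> k kp; rewrite Dstep // dvdn_gcdl.
  + apply/negP => h; rewrite -Dlast in h; move: nSF; rewrite hSC /Cl h.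
    by rewrite Dlast dpos // !orbT.
- by case=> [|k] kp //=; rewrite divn_gt0 ?dpos // dvdn_leq ?dvd_diff // subn_gt0 nmono.
- by rewrite totsum // ps // nltF.
- move=> k kp.
  have dv : d k.+1 %| d k by rewrite Dstep // dvdn_gcdl.
  have e1 : d k = (d k %/ d k.+1) * d k.+1 by rewrite divnK.
  have e2 : n k.+1 = n k + t k.+1 * d k.+1 by rewrite -ps // ps_rec ps // ltnW.
  have e3 : n k = (n k %/ d k) * d k by rewrite divnK // delA // ltnW.
  have h := Dstep k kp.
  rewrite e2 e3 gcdnMDl e1 -muln_gcdl in h.
  apply/eqP; rewrite -(eqn_pmul2r (dpos k.+1 kp)) mul1n; apply/eqP; by rewrite -h.
- move=> x; rewrite gensE //; apply/idP/hasP => [Xx|[k kin /eqP ->]].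
    case: (Xn x Xx) => k kp ->; exists k; first by rewrite mem_iota /= add0n.
    by rewrite n'E.
  move: kin; rewrite mem_iota /= add0n => kp; rewrite n'E //; exact: XnP.
Qed.


Theorem theorem49 (F p : nat) (hF : 0 < F) (hp : 0 < p) :
  (forall d t : nat -> nat,
     SatSeq F p d ->
     (forall i, i < p -> 0 < t i) ->
     \sum_(i < p) t i * d i < F ->
     (forall i, i.+1 < p -> gcdn (d i %/ d i.+1) (t i.+1) = 1) ->
     exists S : pred nat,
       [/\ inSat F S, minimal_SatGen F (gens p d t) S & Sat_rank F S p])
  /\
  (forall S X : pred nat,
     inSat F S -> Sat_rank F S p -> minimal_SatGen F X S ->
     exists d t : nat -> nat,
       [/\ SatSeq F p d,
           (forall i, i < p -> 0 < t i),
           \sum_(i < p) t i * d i < F,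
           (forall i, i.+1 < p -> gcdn (d i %/ d i.+1) (t i.+1) = 1) &
           X =1 gens p d t]).
Proof.
split.
  by move=> d t; apply: part1.
by move=> S X; apply: part2.
Qed.
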